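(* Let $\alpha>0$ and let $\mu\subset\lambda$ be partitions with $|\lambda-\mu|=r$. Then $$\varepsilon(J_{\lambda/\mu})=\frac1{r!}\sum\prod_{i=1}^r\varepsilon\big(J_{\mu^{(i-1)}/\mu^{(i)}}\big),$$ summed over all chains of partitions $\lambda=\mu^{(0)}\supset\mu^{(1)}\supset\cdots\supset\mu^{(r)}=\mu$ with $|\mu^{(i-1)}-\mu^{(i)}|=1$ for $1\le i\le r$.
   Context: $J_\lambda=J_\lambda(x;\alpha)$ is the Jack symmetric function (coefficient of $p_1^{|\lambda|}$ equal to $1$), and the skew Jack functions $J_{\lambda/\mu}$ are defined by $J_\lambda(x,y)=\sum_{\mu\subset\lambda}J_{\lambda/\mu}(x)J_\mu(y)$ for two sets of variables $x,y$. $\varepsilon:\Lambda\to\mathbb{Q}(\alpha)$ is the ring homomorphism with $\varepsilon(p_1)=1$ and $\varepsilon(p_r)=0$ for $r>1$; equivalently $\varepsilon(J_{\lambda/\mu})$ is the coefficient of $p_1^{|\lambda-\mu|}$ in $J_{\lambda/\mu}$. *)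

(* Defs.v *)
From HB Require Import structures.
From mathcomp Require Import all_boot all_order all_algebra.
From mathcomp Require Import mpoly.
Set Implicit Arguments. Unset Strict Implicit. Unset Printing Implicit Defensive.
Import Order.TTheory GRing.Theory Num.Theory.
Local Open Scope ring_scope.

Definition is_part (l : seq nat) : bool := sorted geq l && (0%N \notin l).

Definition psize (l : seq nat) : nat := sumn l.

Definition part_sub (mu la : seq nat) : bool :=
  (size mu <= size la)%N && all (fun i => nth 0%N mu i <= nth 0%N la i)%N (iota 0 (size mu)).

Definition dominated (nu la : seq nat) : bool :=
  (psize nu == psize la) &&
  all (fun k => sumn (take k nu) <= sumn (take k la))%N (iota 0 (size nu + size la).+1).

Fixpoint boxes (la : seq nat) : seq (seq nat) :=
  if la is a :: l then [seq x :: y | x <- iota 0 a.+1, y <- boxes l] else [:: [::]].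

Definition subparts (la : seq nat) : seq (seq nat) :=
  undup [seq filter (predC1 0%N) t | t <- boxes la & sorted geq t].

(* chains la = c_0 \supset c_1 \supset ... \supset c_r = mu of partitions,
   each step removing exactly one box; a chain is returned as the
   list [:: c_0; ...; c_r] *)
Fixpoint chains (r : nat) (la mu : seq nat) : seq (seq (seq nat)) :=
  match r with
  | 0 => if la == mu then [:: [:: la]] else [::]
  | r'.+1 =>
      flatten [seq [seq la :: c | c <- chains r' nu mu]
              | nu <- subparts la & psize nu == (psize la).-1]
  end.

(* An element of Lambda of degree <= n is represented as a polynomial in
   the power sums p_1, ..., p_n : the variable 'X_i (i : 'I_n) stands for
   p_(i+1).  This is the ring R[p_1,...,p_n], which contains every
   symmetric function of degree <= n. *)

Section Lam.
Variables (R : realFieldType) (n : nat).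

Definition Lam := {mpoly R[n]}.

Definition pweight (m : 'X_{1..n}) : nat := (\sum_(i < n) i.+1 * m i)%N.

Definition phomog (d : nat) (f : Lam) : bool := all (fun m => pweight m == d) (msupp f).

Definition eps (f : Lam) : R := f.@[fun i : 'I_n => if val i == 0%N then 1 else 0].

(* the alpha-scalar product <p_nu, p_kappa> = delta z_nu alpha^(l(nu)) *)
Definition zee (alpha : R) (m : 'X_{1..n}) : R :=
  \prod_(i < n) ((i.+1)%:R ^+ m i * (m i)`!%:R * alpha ^+ m i).

Definition jscal (alpha : R) (f g : Lam) : R :=
  \sum_(m <- msupp f) f@_m * g@_m * zee alpha m.

(* realization in n ordinary variables x_1..x_n : p_k |-> sum_j x_j^k *)
Definition psum (k : nat) : {mpoly R[n]} := \sum_(j < n) 'X_j ^+ k.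
Definition toX (f : Lam) : {mpoly R[n]} := comp_mpoly [tuple psum i.+1 | i < n] f.

Definition mshape (a : 'X_{1..n}) : seq nat :=
  filter (predC1 0%N) (sort geq [seq a j | j <- enum 'I_n]).

(* f (in x-variables) lies in the span of the m_nu with nu <= la *)
Definition dom_triang (la : seq nat) (f : Lam) : bool :=
  all (fun a => dominated (mshape a) la) (msupp (toX f)).

(* J is the family of Jack functions J_la (for |la| <= n), normalized by
   coefficient of p_1^|la| equal to 1: J_la is homogeneous of degree |la|,
   J_la = sum_(nu <= la) c_nu m_nu, the J_la are pairwise orthogonal for
   the alpha-scalar product, and eps(J_la) = 1. *)
Definition is_jack (alpha : R) (J : seq nat -> Lam) : Prop :=
  forall la, is_part la -> (psize la <= n)%N ->
    [/\ phomog (psize la) (J la),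
        dom_triang la (J la),
        eps (J la) = 1 &
        forall mu, is_part mu -> psize mu = psize la -> mu <> la ->
          jscal alpha (J la) (J mu) = 0].

(* two sets of variables: p_k(x) = 'X_(lshift n k), p_k(y) = 'X_(rshift n k) *)
Definition inx (f : Lam) : {mpoly R[n + n]} :=
  comp_mpoly [tuple 'X_(lshift n i) | i < n] f.
Definition iny (f : Lam) : {mpoly R[n + n]} :=
  comp_mpoly [tuple 'X_(rshift n i) | i < n] f.
Definition coprod (f : Lam) : {mpoly R[n + n]} :=
  comp_mpoly [tuple 'X_(lshift n i) + 'X_(rshift n i) | i < n] f.

(* S la mu = J_(la/mu) : J_la(x,y) = sum_(mu \subset la) J_(la/mu)(x) J_mu(y) *)
Definition is_skew_jack (J : seq nat -> Lam) (S : seq nat -> seq nat -> Lam) : Prop :=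
  forall la, is_part la -> (psize la <= n)%N ->
    coprod (J la) = \sum_(mu <- subparts la) inx (S la mu) * iny (J mu).

End Lam.

(* Main.v *)
Require Import Defs.
From HB Require Import structures.
From mathcomp Require Import all_boot all_order all_algebra.
From mathcomp Require Import mpoly.
From mathcomp Require Import zify lra.
Set Implicit Arguments. Unset Strict Implicit. Unset Printing Implicit Defensive.
Import Order.TTheory GRing.Theory Num.Theory.

Lemma mem_boxes la t : (t \in boxes la) = (size t == size la) && all2 leq t la.
Proof.
elim: la t => [|a l IH] t.
  by case: t.
rewrite /boxes -/boxes; apply/flatten_mapP/idP.
  case=> x hx /mapP[y hy ->] /=.
  move: hy hx; rewrite IH mem_iota add0n ltnS => /andP[h1 h2] /andP[_ h3].
  by rewrite eqSS h1 h2 h3.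
case: t => [|x y] //=; rewrite eqSS => /andP[hs /andP[hx hy]].
exists x; first by rewrite -[0 :: _]/(iota 0 a.+1) mem_iota add0n ltnS hx.
by apply: map_f; rewrite IH hs hy.
Qed.

Lemma sumn_all2 s t : all2 leq s t -> sumn s <= sumn t.
Proof.
elim: s t => [|x s IH] [|y t] //= /andP[h1 h2].
by apply: leq_add => //; apply: IH.
Qed.

Lemma sumn_filter0 s : sumn (filter (predC1 0%N) s) = sumn s.
Proof. by elim: s => [|x s IH] //=; case: eqP => [->|_] /=; rewrite IH. Qed.

Lemma mem_subparts_inv la k : k \in subparts la ->
  is_part k /\ (psize k <= psize la)%N.
Proof.
rewrite mem_undup => /mapP[t]; rewrite mem_filter => /andP[hs ht] ->.
move: ht; rewrite mem_boxes => /andP[_ ha].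
split.
  rewrite /is_part; apply/andP; split.
    apply: sorted_filter => //.
    by move=> a b c hab hbc; apply: leq_trans hbc hab.
  by rewrite mem_filter; apply/negP => /andP[/negP []].
by rewrite /psize sumn_filter0; apply: sumn_all2.
Qed.

Lemma path_geq_nseq y k : path geq y (nseq k 0%N).
Proof. by elim: k y => [|k IH] y //=; rewrite IH andbT. Qed.

Lemma sorted_cat_zeros s k : sorted geq s -> sorted geq (s ++ nseq k 0%N).
Proof.
case: s => [|x s] /=.
  by case: k => //= k _; apply: path_geq_nseq.
by move=> h; rewrite cat_path h path_geq_nseq.
Qed.

Lemma all2_leq_nth s t : size s = size t ->
  (forall i, (i < size s)%N -> (nth 0 s i <= nth 0 t i)%N) -> all2 leq s t.
Proof.
elim: s t => [|x s IH] [|y t] //= [hs] h.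
rewrite (h 0%N) //=; apply: IH => // i hi.
exact: (h i.+1).
Qed.

Lemma mem_subparts la mu : is_part mu -> part_sub mu la -> mu \in subparts la.
Proof.
move=> /andP[hso h0] /andP[hsz /allP hle].
rewrite mem_undup; apply/mapP.
exists (mu ++ nseq (size la - size mu) 0%N).
  rewrite mem_filter sorted_cat_zeros // mem_boxes size_cat size_nseq subnKC //=.
  rewrite eqxx /=; apply: all2_leq_nth; first by rewrite size_cat size_nseq subnKC.
  move=> i; rewrite size_cat size_nseq subnKC // => hi.
  rewrite nth_cat; case: ifP => hm.
    by apply: hle; rewrite mem_iota.
  by rewrite nth_nseq; case: ifP.
rewrite filter_cat filter_nseq /= cats0.
apply/esym/all_filterP; apply/allP => x hx /=.
by apply/eqP => e; move: h0; rewrite -e hx.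
Qed.

Lemma size_le_sumn s : 0%N \notin s -> (size s <= sumn s)%N.
Proof.
elim: s => [|x s IH] //=; rewrite in_cons negb_or => /andP[hx hs].
rewrite -add1n; apply: leq_add; first by rewrite lt0n eq_sym.
exact: IH.
Qed.

Lemma nth_le_sumn s i : (nth 0 s i <= sumn s)%N.
Proof.
elim: s i => [|x s IH] [|i] //=; first exact: leq_addr.
by apply: leq_trans (IH i) _; apply: leq_addl.
Qed.

Lemma part_sub_box n mu : is_part mu -> (psize mu <= n)%N -> part_sub mu (nseq n n).
Proof.
move=> /andP[_ h0] hn; rewrite /part_sub size_nseq.
have hs : (size mu <= n)%N by apply: leq_trans (size_le_sumn h0) hn.
rewrite hs /=; apply/allP => i; rewrite mem_iota add0n => /andP[_ hi].
rewrite nth_nseq (leq_trans hi hs).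
exact: leq_trans (nth_le_sumn mu i) hn.
Qed.

Definition allparts n := [seq mu <- subparts (nseq n n) | (psize mu <= n)%N].

Lemma allparts_uniq n : uniq (allparts n).
Proof. by rewrite filter_uniq // undup_uniq. Qed.

Lemma mem_allparts n mu : is_part mu -> (psize mu <= n)%N -> mu \in allparts n.
Proof. by move=> hp hn; rewrite mem_filter hn mem_subparts // part_sub_box. Qed.

Lemma mem_allparts_inv n mu : mu \in allparts n -> is_part mu /\ (psize mu <= n)%N.
Proof.
by rewrite mem_filter => /andP[h1 h2]; split => //; case: (mem_subparts_inv h2).
Qed.

Lemma chains_head r la mu c : c \in chains r la mu -> nth [::] c 0 = la.
Proof.
case: r => [|r] /=.
  by case: eqP => // _; rewrite inE => /eqP ->.
by move=> /flattenP[s /mapP[nu _ ->] /mapP[c' _ ->]].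
Qed.

Section Chains.
Variable (R : ringType) (e : seq nat -> seq nat -> R).
Local Open Scope ring_scope.

Definition cw r la mu : R :=
  \sum_(c <- chains r la mu) \prod_(i < r) e (nth [::] c i) (nth [::] c i.+1).

Lemma cw0 la mu : cw 0%N la mu = (la == mu)%:R.
Proof.
rewrite /cw /=; case: eqP => _; first by rewrite big_seq1 big_ord0.
by rewrite big_nil.
Qed.

Lemma cwS r la mu : cw r.+1 la mu =
  \sum_(nu <- subparts la | psize nu == (psize la).-1) e la nu * cw r nu mu.
Proof.
rewrite /cw /= big_flatten /= big_map big_filter.
apply: eq_bigr => nu _; rewrite big_map mulr_sumr big_seq [RHS]big_seq.
apply: eq_bigr => c hc; rewrite big_ord_recl /=.
by rewrite (chains_head hc).
Qed.
End Chains.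

Local Open Scope ring_scope.

Section Alg.
Variable R : realFieldType.

Lemma comp_mpoly_comp n k l (p : {mpoly R[n]}) (lq : n.-tuple {mpoly R[k]})
   (lr : k.-tuple {mpoly R[l]}) :
  (p \mPo lq) \mPo lr = p \mPo [tuple (tnth lq i) \mPo lr | i < n].
Proof.
rewrite [p \mPo lq]comp_mpolyEX [p \mPo _]comp_mpolyEX raddf_sum /=.
apply: eq_bigr => m _; rewrite comp_mpolyZ !comp_mpolyX rmorph_prod /=.
by congr (_ *: _); apply: eq_bigr => i _; rewrite rmorphXn tnth_mktuple.
Qed.

Lemma comp_mpoly_const n k (p : {mpoly R[n]}) (c : 'I_n -> R) :
  p \mPo [tuple (c i)%:MP_[k] | i < n] = (p.@[c])%:MP.
Proof.
rewrite comp_mpolyEX mevalE raddf_sum /=; apply: eq_bigr => m _.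
rewrite comp_mpolyX -mul_mpolyC mpolyCM; congr (_ * _).
rewrite rmorph_prod /=; apply: eq_bigr => i _.
by rewrite tnth_mktuple rmorphXn.
Qed.

Definition ptv n (i : 'I_n) : R := if val i == 0%N then 1 else 0.
Definition Etup n : (n + n).-tuple {mpoly R[n]} :=
  [tuple match split i with inl k => (ptv k)%:MP | inr k => 'X_k end | i < n + n].
Definition Tsh n (f : {mpoly R[n]}) := f \mPo [tuple 'X_i + (ptv i)%:MP | i < n].

Lemma tnth_Etup_l n (i : 'I_n) : 'X_(lshift n i) \mPo Etup n = (ptv i)%:MP.
Proof.
rewrite comp_mpolyXU -(tnth_nth 0) tnth_mktuple.
by rewrite (_ : lshift n i = unsplit (inl i)) // unsplitK.
Qed.

Lemma tnth_Etup_r n (i : 'I_n) : 'X_(rshift n i) \mPo Etup n = 'X_i.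
Proof.
rewrite comp_mpolyXU -(tnth_nth 0) tnth_mktuple.
by rewrite (_ : rshift n i = unsplit (inr i)) // unsplitK.
Qed.

Lemma E_inx n (a : {mpoly R[n]}) : inx a \mPo Etup n = (eps a)%:MP.
Proof.
rewrite /inx comp_mpoly_comp.
rewrite (_ : [tuple _ | i < n] = [tuple (ptv i)%:MP_[n] | i < n]).
  by rewrite comp_mpoly_const.
by apply: eq_from_tnth => i; rewrite !tnth_mktuple tnth_Etup_l.
Qed.

Lemma E_iny n (a : {mpoly R[n]}) : iny a \mPo Etup n = a.
Proof.
rewrite /iny comp_mpoly_comp -[RHS]comp_mpoly_id; congr comp_mpoly.
by apply: eq_from_tnth => i; rewrite !tnth_mktuple tnth_Etup_r.
Qed.

Lemma E_coprod n (a : {mpoly R[n]}) : coprod a \mPo Etup n = Tsh a.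
Proof.
rewrite /coprod comp_mpoly_comp; congr comp_mpoly.
apply: eq_from_tnth => i; rewrite !tnth_mktuple raddfD /=.
by rewrite tnth_Etup_l tnth_Etup_r addrC.
Qed.

End Alg.

Section Tay.
Variable R : realFieldType.

Definition Wk n (k : nat) (g : {mpoly R[n]}) : {mpoly R[n]} :=
  \sum_(m <- msupp g) ((pweight m == k)%:R * g@_m) *: 'X_[m].

Lemma mcoeff_Wk n k (g : {mpoly R[n]}) q : (Wk k g)@_q = (pweight q == k)%:R * g@_q.
Proof.
rewrite /Wk raddf_sum /=.
under eq_bigr do rewrite mcoeffZ mcoeffX.
case hq: (q \in msupp g).
  rewrite (bigD1_seq q) //= ?msupp_uniq // eqxx mulr1 big1 ?addr0 // => m hm.
  by rewrite eq_sym (negbTE hm) mulr0.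
rewrite big_seq big1; last first.
  move=> m hm; rewrite (_ : (m == q) = false) ?mulr0 //.
  by apply/eqP => e; rewrite e hq in hm.
by move/negbT: hq; rewrite mcoeff_msupp negbK => /eqP ->; rewrite mulr0.
Qed.

Lemma Wk_is_linear n k : linear (@Wk n k).
Proof.
move=> a u v; apply/mpolyP => q.
by rewrite mcoeffD mcoeffZ !mcoeff_Wk mcoeffD mcoeffZ mulrDr mulrCA.
Qed.

HB.instance Definition _ n k := GRing.isLinear.Build R {mpoly R[n]} {mpoly R[n]}
  _ (@Wk n k) (@Wk_is_linear n k).

Lemma Wk_X n k (q : 'X_{1..n}) : Wk k 'X_[q] = (pweight q == k)%:R *: 'X_[q].
Proof.
apply/mpolyP => q'; rewrite mcoeff_Wk mcoeffZ !mcoeffX.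
by case: (q =P q') => [->|_]; rewrite ?mulr0.
Qed.

Lemma pweightD n (m1 m2 : 'X_{1..n}) :
  pweight (m1 + m2)%MM = (pweight m1 + pweight m2)%N.
Proof. by rewrite /pweight -big_split /=; apply: eq_bigr => i _; rewrite mnmDE mulnDr. Qed.

Lemma pweightU0 n j : pweight (U_(@ord0 n) *+ j)%MM = j.
Proof.
rewrite /pweight big_ord_recl big1 ?addn0.
  by rewrite mulmnE mnm1E eqxx mul1n mul1n.
by move=> i _; rewrite mulmnE mnm1E (negbTE (neq_lift _ _)) mul0n muln0.
Qed.

Lemma Tsh_X n (m : 'X_{1..n.+1}) :
  let m0 := (m - U_(ord0) *+ m ord0)%MM in
  Tsh ('X_[m] : {mpoly R[n.+1]}) = \sum_(j < (m ord0).+1) ('C(m ord0, j))%:R *: 'X_[U_(ord0) *+ j + m0].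
Proof.
move=> m0.
have hX : 'X_[m0] = \prod_(i < n) 'X_(lift ord0 i) ^+ m (lift ord0 i) :> {mpoly R[n.+1]}.
  rewrite mpolyXE_id big_ord_recl /m0 mnmBE mulmnE mnm1E eqxx mul1n subnn expr0 mul1r.
  by apply: eq_bigr => i _; rewrite mnmBE mulmnE mnm1E (negbTE (neq_lift _ _)) mul0n subn0.
rewrite /Tsh comp_mpolyX big_ord_recl tnth_mktuple /ptv /= mpolyC1.
rewrite (_ : \prod_(i < n) _ = 'X_[m0]); last first.
  by rewrite hX; apply: eq_bigr => i _; rewrite tnth_mktuple /= mpolyC0 addr0.
rewrite exprD1n mulr_suml; apply: eq_bigr => j _.
by rewrite -mulr_natl -scaler_nat -scalerAl mpolyXn mpolyXD mul1r scalerAl.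
Qed.

Lemma W_T_X n (m : 'X_{1..n.+1}) d r : pweight m = d -> (r <= d)%N ->
  Wk (d - r) (Tsh ('X_[m] : {mpoly R[n.+1]})) = (r`!%:R)^-1 *: ('X_[m] : {mpoly R[n.+1]})^`M(ord0, r).
Proof.
move=> hd hr; rewrite Tsh_X /= linear_sum /=.
set a := m ord0; set m0 := (m - U_(ord0) *+ a)%MM.
have hm : m = (U_(ord0) *+ a + m0)%MM.
  apply/mnmP => i; rewrite mnmDE mnmBE mulmnE mnm1E.
  case: eqP => [<-|_]; first by rewrite mul1n subnn addn0.
  by rewrite mul0n subn0.
have hw : (pweight m0 = d - a)%N.
  by move: hd; rewrite {1}hm pweightD pweightU0 => <-; rewrite addKn.
have had : (a <= d)%N.
  by rewrite -hd hm pweightD pweightU0 leq_addr.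
under eq_bigr do rewrite linearZ /= Wk_X pweightD pweightU0 hw scalerA.
rewrite mderivnX.
case: (leqP r a) => hra.
  have hj : (a - r < a.+1)%N by rewrite ltnS leq_subr.
  rewrite (bigD1 (Ordinal hj)) //= big1 ?addr0; last first.
    move=> j /eqP hj'; rewrite (_ : (_ == _) = false) ?mulr0 ?scale0r //.
    apply/eqP => e; apply: hj'; apply/val_inj => /=; lia.
  rewrite (_ : (a - r + (d - a) == d - r)%N = true); last by apply/eqP; lia.
  rewrite mulr1 -bin_ffact natrM scalerA mulrCA mulVf ?mulr1 ?pnatr_eq0 -?lt0n ?fact_gt0 //.
  rewrite bin_sub //.
  congr (_ *: 'X_[_]); apply/mnmP => i.
  rewrite !mnmDE !mnmBE !mulmnE !mnm1E; case: eqP => [<-|_].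
    by rewrite !mul1n subnn addn0.
  by rewrite !mul0n subn0.
rewrite ffact_small // scale0r scaler0 big1 // => j _.
rewrite (_ : (_ == _) = false) ?mulr0 ?scale0r //.
apply/eqP; have := ltn_ord j; lia.
Qed.

Lemma TshZ n c (p : {mpoly R[n]}) : Tsh (c *: p) = c *: Tsh p.
Proof. exact: comp_mpolyZ. Qed.

Lemma W_T n d r (f : {mpoly R[n.+1]}) : phomog d f -> (r <= d)%N ->
  Wk (d - r) (Tsh f) = (r`!%:R)^-1 *: f^`M(ord0, r).
Proof.
move=> /allP hf hr.
have hE := mpolyE f; set s := msupp f in hE hf; rewrite hE.
rewrite /Tsh (raddf_sum (comp_mpoly (k:=n.+1) [tuple 'X_i + (ptv R i)%:MP | i < n.+1])).
rewrite !linear_sum.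
rewrite big_seq [RHS]big_seq; apply: eq_bigr => m hm.
have hw : pweight m = d by apply/eqP; exact: hf.
rewrite !linearZ /= -[_ \mPo _]/(Tsh _) TshZ linearZ /= (W_T_X hw hr).
by rewrite !scalerA mulrC.
Qed.

End Tay.

Section Main.
Variable R : realFieldType.

Lemma T_expand n (J : seq nat -> {mpoly R[n]}) S la :
  is_skew_jack J S -> is_part la -> (psize la <= n)%N ->
  Tsh (J la) = \sum_(mu <- subparts la) eps (S la mu) *: J mu.
Proof.
move=> hS hp hn; rewrite -E_coprod (hS la hp hn) rmorph_sum /=.
by apply: eq_bigr => mu _; rewrite rmorphM /= E_inx E_iny mul_mpolyC.
Qed.

Lemma Wk_J n alpha (J : seq nat -> {mpoly R[n]}) k d :
  is_jack alpha J -> is_part k -> (psize k <= n)%N ->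
  Wk d (J k) = (psize k == d)%:R *: J k.
Proof.
move=> hJ hp hn; have [/allP hh _ _ _] := hJ k hp hn.
apply/mpolyP => q; rewrite mcoeff_Wk mcoeffZ.
case hq: (q \in msupp (J k)).
  by rewrite (eqP (hh q hq)).
by move/negbT: hq; rewrite mcoeff_msupp negbK => /eqP ->; rewrite !mulr0.
Qed.

Lemma one_box n alpha (J : seq nat -> {mpoly R[n.+1]}) S nu :
  is_jack alpha J -> is_skew_jack J S -> is_part nu ->
  (0 < psize nu)%N -> (psize nu <= n.+1)%N ->
  (J nu)^`M(ord0) = \sum_(k <- subparts nu | psize k == (psize nu).-1)
                        eps (S nu k) *: J k.
Proof.
move=> hJ hS hp h0 hn.
have [hh _ _ _] := hJ nu hp hn.
have := W_T hh h0; rewrite factS fact0 muln1 invr1 scale1r nderivn1 => <-.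
rewrite (T_expand hS hp hn) linear_sum /= [RHS]big_mkcond /=.
rewrite big_seq [RHS]big_seq; apply: eq_bigr => k hk.
have [hpk hsk] := mem_subparts_inv hk.
rewrite linearZ /= (Wk_J _ hJ hpk (leq_trans hsk hn)) subn1.
by case: (psize k == _); rewrite ?scale1r ?scale0r ?scaler0.
Qed.

Definition ee n (S : seq nat -> seq nat -> {mpoly R[n]}) a b := eps (S a b).

Lemma iter_der n alpha (J : seq nat -> {mpoly R[n.+1]}) S r la :
  is_jack alpha J -> is_skew_jack J S -> is_part la ->
  (psize la <= n.+1)%N -> (r <= psize la)%N ->
  (J la)^`M(ord0, r) = \sum_(mu <- allparts n.+1) cw (ee S) r la mu *: J mu.
Proof.
move=> hJ hS; elim: r la => [|r IH] la hp hn hr.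
  rewrite mderivn0.
  rewrite (bigD1_seq la) ?allparts_uniq ?mem_allparts //= cw0 eqxx scale1r.
  rewrite big1 ?addr0 // => mu hmu.
  by rewrite cw0 eq_sym (negbTE hmu) scale0r.
rewrite mderivSn (one_box hJ hS hp) //; last by apply: leq_ltn_trans hr.
rewrite linear_sum /=.
under [RHS]eq_bigr do rewrite cwS scaler_suml.
rewrite exchange_big /= big_seq_cond [RHS]big_seq_cond.
apply: eq_bigr => nu /andP[hnu hsz].
have [hpn hsn] := mem_subparts_inv hnu.
rewrite linearZ /= IH //; last 2 first.
- exact: leq_trans hsn hn.
- by rewrite (eqP hsz); lia.
by rewrite scaler_sumr; apply: eq_bigr => mu _; rewrite scalerA.
Qed.

Lemma sum_restrict (T : eqType) (s : seq T) (P : pred T) (F : T -> R) :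
  (forall x, ~~ P x -> F x = 0) -> \sum_(x <- s) F x = \sum_(x <- s | P x) F x.
Proof.
move=> H; rewrite [RHS]big_mkcond; apply: eq_bigr => x _.
by case: ifP => // /negbT /H.
Qed.

Lemma jscalE n alpha (f g : {mpoly R[n]}) :
  jscal alpha f g = \sum_(m <- msupp g) f@_m * g@_m * zee alpha m.
Proof.
rewrite /jscal (@sum_restrict _ _ (fun m => m \in msupp g)); last first.
  by move=> m; rewrite mcoeff_msupp negbK => /eqP ->; rewrite mulr0 mul0r.
rewrite [in RHS](@sum_restrict _ _ (fun m => m \in msupp f)); last first.
  by move=> m; rewrite mcoeff_msupp negbK => /eqP ->; rewrite !mul0r.
rewrite -big_filter -[in RHS]big_filter; apply: perm_big; apply: uniq_perm.
- by rewrite filter_uniq ?msupp_uniq.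
- by rewrite filter_uniq ?msupp_uniq.
by move=> m; rewrite !mem_filter andbC.
Qed.

Lemma jscal_sum n (alpha : R) I (s : seq I) (a : I -> R) (F : I -> {mpoly R[n]}) g :
  jscal alpha (\sum_(i <- s) a i *: F i) g = \sum_(i <- s) a i * jscal alpha (F i) g.
Proof.
rewrite jscalE; under eq_bigr do rewrite raddf_sum /= !mulr_suml.
rewrite exchange_big /=; apply: eq_bigr => i _.
rewrite jscalE mulr_sumr; apply: eq_bigr => m _.
by rewrite mcoeffZ !mulrA.
Qed.

Lemma zee_gt0 n (alpha : R) (m : 'X_{1..n}) : 0 < alpha -> 0 < zee alpha m.
Proof.
move=> ha; apply: prodr_gt0 => i _.
by rewrite !mulr_gt0 ?exprn_gt0 ?ltr0n ?fact_gt0.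
Qed.

Lemma jscal_self_neq0 n alpha (f : {mpoly R[n]}) : 0 < alpha -> f != 0 ->
  jscal alpha f f != 0.
Proof.
move=> ha hf; rewrite /jscal.
case hs: (msupp f) => [|m s].
  by move: hf; rewrite (mpolyE f) hs big_nil eqxx.
have hm : m \in msupp f by rewrite hs mem_head.
rewrite big_cons.
have h1 : 0 < f@_m * f@_m * zee alpha m.
  apply: mulr_gt0; last exact: zee_gt0.
  rewrite -expr2 lt0r sqr_ge0 andbT sqrf_eq0.
  by rewrite -mcoeff_msupp.
have h2 : 0 <= \sum_(j <- s) f@_j * f@_j * zee alpha j.
  apply: sumr_ge0 => j _; apply: mulr_ge0; last exact: ltW (zee_gt0 _ ha).
  by rewrite -expr2 sqr_ge0.
apply/eqP => e; lra.
Qed.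

Lemma J_neq0 n alpha (J : seq nat -> {mpoly R[n]}) k :
  is_jack alpha J -> is_part k -> (psize k <= n)%N -> J k != 0.
Proof.
move=> hJ hp hn; have [_ _ he _] := hJ k hp hn.
apply/eqP => e; move: he; rewrite e /eps meval0 => /eqP.
by rewrite eq_sym oner_eq0.
Qed.

Lemma jscal_J n alpha (J : seq nat -> {mpoly R[n]}) k mu :
  is_jack alpha J -> is_part k -> (psize k <= n)%N ->
  is_part mu -> (psize mu <= n)%N ->
  jscal alpha (J k) (J mu) = (k == mu)%:R * jscal alpha (J mu) (J mu).
Proof.
move=> hJ hpk hnk hpm hnm.
case: (eqVneq k mu) => [->|hne]; first by rewrite mul1r.
rewrite mul0r.
case: (eqVneq (psize mu) (psize k)) => hs.
  have [_ _ _ ho] := hJ k hpk hnk.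
  by apply: ho => // e; move: hne; rewrite e eqxx.
have [/allP hk _ _ _] := hJ k hpk hnk.
have [/allP hm _ _ _] := hJ mu hpm hnm.
rewrite /jscal big_seq big1 // => m hmk.
case hmm: (m \in msupp (J mu)).
  by move: hs; rewrite -(eqP (hk m hmk)) (eqP (hm m hmm)) eqxx.
by move/negbT: hmm; rewrite mcoeff_msupp negbK => /eqP ->; rewrite mulr0 mul0r.
Qed.

End Main.

Section Fin.
Variable R : realFieldType.

Lemma sum_delta (T : eqType) (s : seq T) x (F : T -> R) c :
  uniq s -> x \in s -> \sum_(y <- s) F y * ((y == x)%:R * c) = F x * c.
Proof.
move=> hu hx; rewrite (bigD1_seq x) //= eqxx mul1r big1.
  by rewrite addr0.
by move=> y /negbTE ->; rewrite mul0r mulr0.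
Qed.

Lemma Tsh0 (f : {mpoly R[0]}) : Tsh f = f.
Proof.
rewrite /Tsh (tuple0 [tuple _ | i < 0]) -(tuple0 [tuple 'X_i | i < 0]).
exact: comp_mpoly_id.
Qed.

Lemma nil_of_psize0 s : is_part s -> psize s = 0%N -> s = [::].
Proof.
move=> /andP[_ h0] hs; have := size_le_sumn h0.
by rewrite -/(psize s) hs; case: s {h0 hs}.
Qed.

Lemma main_gen n (alpha : R) la mu (J : seq nat -> {mpoly R[n]})
    (S : seq nat -> seq nat -> {mpoly R[n]}) :
  n = psize la -> 0 < alpha -> is_part la -> is_part mu -> part_sub mu la ->
  is_jack alpha J -> is_skew_jack J S ->
  eps (S la mu) = ((psize la - psize mu)`!%:R)^-1 *
                    cw (ee S) (psize la - psize mu) la mu.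
Proof.
move=> hN ha hpl hpm hsub hJ hS.
have hmu := mem_subparts hpm hsub.
have [_ hsm] := mem_subparts_inv hmu.
case: n J S hN hJ hS => [|n] J S hN hJ hS.
  have hl := nil_of_psize0 hpl (esym hN).
  have hm : mu = [::] by apply: nil_of_psize0 => //; move: hsm; rewrite -hN; case: psize.
  subst la mu; rewrite cw0 eqxx fact0 invr1 mul1r.
  have := T_expand hS hpl (leqnn _).
  rewrite (_ : subparts [::] = [:: [::]]) // big_seq1 Tsh0 => he.
  have hne := J_neq0 hJ hpl (leqnn _).
  move/eqP: he; rewrite -subr_eq0 -{1}(scale1r (J _)) -scalerBl scaler_eq0.
  by rewrite (negbTE hne) orbF subr_eq0 => /eqP <-.
set d := psize la in hN hsm *; set r := (d - psize mu)%N.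
have hn : (d <= n.+1)%N by rewrite hN.
have hrl : (r <= d)%N by rewrite leq_subr.
have hA := iter_der hJ hS hpl hn hrl.
have [hh _ _ _] := hJ la hpl hn.
have hB := W_T hh hrl.
rewrite hA (T_expand hS hpl hn) linear_sum /= scaler_sumr in hB.
have hL : \sum_(k <- subparts la) Wk (d - r)%N (eps (S la k) *: J k) =
          \sum_(k <- subparts la) (eps (S la k) * (psize k == (d - r)%N)%:R) *: J k.
  rewrite big_seq [RHS]big_seq; apply: eq_bigr => k hk.
  have [hpk hsk] := mem_subparts_inv hk.
  by rewrite linearZ /= (Wk_J _ hJ hpk (leq_trans hsk hn)) scalerA.
rewrite hL in hB.
have := congr1 (fun F => jscal alpha F (J mu)) hB => /=.
under [in RHS]eq_bigr do rewrite scalerA.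
rewrite !jscal_sum.
have hmn : (psize mu <= n.+1)%N by apply: leq_trans hsm hn.
rewrite big_seq [in RHS]big_seq.
under eq_bigr => k hk.
  have [hpk hsk] := mem_subparts_inv hk.
  rewrite (jscal_J hJ hpk (leq_trans hsk hn) hpm hmn).
  over.
under [in RHS]eq_bigr => k hk.
  have [hpk hsk] := mem_allparts_inv hk.
  rewrite (jscal_J hJ hpk hsk hpm hmn).
  over.
rewrite -big_seq -[in RHS]big_seq.
rewrite (sum_delta (fun k => eps (S la k) * (psize k == (d - r)%N)%:R)) ?undup_uniq //.
rewrite (sum_delta (fun k => (r`!%:R)^-1 * cw (ee S) r la k)) ?allparts_uniq //;
  last by apply: mem_allparts.
rewrite (_ : (psize mu == (d - r)%N) = true); last by apply/eqP; rewrite /r; lia.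
rewrite mulr1 => /mulIf; apply.
exact: jscal_self_neq0 ha (J_neq0 hJ hpm hmn).
Qed.

End Fin.

Unset Implicit Arguments.

Theorem lemmaA (R : realFieldType) (alpha : R) (la mu : seq nat)
    (J : seq nat -> Lam R (psize la))
    (S : seq nat -> seq nat -> Lam R (psize la)) :
  0 < alpha ->
  is_part la -> is_part mu -> part_sub mu la ->
  is_jack alpha J -> is_skew_jack J S ->
  let r := (psize la - psize mu)%N in
  eps (S la mu) =
    (r`!%:R)^-1 *
    \sum_(c <- chains r la mu)
       \prod_(i < r) eps (S (nth [::] c i) (nth [::] c i.+1)).
Proof.
move=> ha hpl hpm hsub hJ hS r.
exact: (@main_gen R (psize la) alpha la mu J S erefl ha hpl hpm hsub hJ hS).
Qed.
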